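(* Let $\rho$ be a measurable c.n.d. kernel on $\mathcal{X}$ with $\rho(x,x)=0$ for all $x\in\mathcal{X}$, let $w:\mathcal{X}\to[0,1]$ be a measurable weight function, and let $v:\mathcal{X}\to\mathcal{X}$ be measurable. Then the threshold-weighted kernel score $\mathrm{tw}S_\rho(\cdot,\cdot;v)$ (as a scoring rule on $\mathcal{M}_{\tilde\rho}$, $\tilde\rho(x,x')=\rho(v(x),v(x'))$) is localising with respect to $w$ if and only if $\rho(v(z),v(x))=\rho(v(z'),v(x))$ for all $z,z'\in\{w=0\}$ and all $x\in\mathcal{X}$.
   Context: A kernel $\rho:\mathcal{X}\times\mathcal{X}\to\mathbb{R}$ is symmetric; it is conditionally negative definite (c.n.d.) if $\sum_{i,j}c_ic_j\rho(x_i,x_j)\le0$ for all finite choices $x_i\in\mathcal{X}$, $c_i\in\mathbb{R}$ with $\sum_ic_i=0$. Threshold-weighted kernel score: $\mathrm{tw}S_\rho(P,y;v)=\mathbb{E}_P[\rho(v(X),v(y))]-\tfrac12\mathbb{E}_P[\rho(v(X),v(X'))]-\tfrac12\rho(v(y),v(y))$ with $X,X'\sim P$ independent. $\mathcal{M}_{\tilde\rho}$ is the set of probability measures $P$ on $\mathcal{X}$ with $\mathbb{E}_P[\tilde\rho(X,x_0)]<\infty$ for some $x_0$. Write $\{w>0\}=\{x:w(x)>0\}$, $\{w=0\}=\{x:w(x)=0\}$. A scoring rule $S$ on a class $\mathcal{M}$ is localising with respect to $w$ if for all $P,Q\in\mathcal{M}$, $P(\cdot\cap\{w>0\})=Q(\cdot\cap\{w>0\})$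 implies $S(P,y)=S(Q,y)$ for all $y\in\mathcal{X}$. *)

(* Defs.v *)
From HB Require Import structures.
From mathcomp Require Import all_boot all_order all_algebra.
From mathcomp Require Import all_classical all_reals all_analysis.
Set Implicit Arguments. Unset Strict Implicit. Unset Printing Implicit Defensive.
Import Order.TTheory GRing.Theory Num.Theory.
Local Open Scope classical_set_scope.
Local Open Scope ring_scope.

Section defs.
Context {d : measure_display} {X : measurableType d} {R : realType}.

Definition symmetric_kernel (rho : X -> X -> R) : Prop :=
  forall x y, rho x y = rho y x.

Definition cnd_kernel (rho : X -> X -> R) : Prop :=
  symmetric_kernel rho /\
  forall (n : nat) (x : 'I_n -> X) (c : 'I_n -> R),
    \sum_(i < n) c i = 0 ->
    \sum_(i < n) \sum_(j < n) c i * c j * rho (x i) (x j) <= 0.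

Definition twS (rho : X -> X -> R) (v : X -> X)
    (P : probability X R) (y : X) : \bar R :=
  ((\int[P]_x (rho (v x) (v y))%:E)
   - (2^-1)%:E * (\int[(P \x P)%E]_z (rho (v z.1) (v z.2))%:E)
   - (2^-1)%:E * (rho (v y) (v y))%:E)%E.

Definition M_class (rhot : X -> X -> R) (P : probability X R) : Prop :=
  exists x0 : X, (\int[P]_x (rhot x x0)%:E < +oo)%E.

Definition localising (S : probability X R -> X -> \bar R)
    (M : probability X R -> Prop) (w : X -> R) : Prop :=
  forall P Q : probability X R, M P -> M Q ->
    (forall A : set X, measurable A ->
       P (A `&` [set x | 0 < w x]) = Q (A `&` [set x | 0 < w x])) ->
    forall y : X, S P y = S Q y.

End defs.

(* Main.v *)
Require Import Defs.
From HB Require Import structures.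
From mathcomp Require Import all_boot all_order all_algebra.
From mathcomp Require Import all_classical all_reals all_analysis.
From mathcomp Require Import measurable_realfun.
From mathcomp Require Import lra.
Import Order.TTheory GRing.Theory Num.Theory.
Local Open Scope classical_set_scope.
Local Open Scope ring_scope.

Lemma L1 (d : measure_display) (X : measurableType d) (R : realType)
  (P Q : probability X R) (W : set X) (mW : measurable W)
  (agree : forall A, measurable A -> P (A `&` W) = Q (A `&` W))
  (f : X -> \bar R) (mf : measurable_fun setT f) (f0 : forall x, (0 <= f x)%E)
  (fc : forall z z', ~ W z -> ~ W z' -> f z = f z') :
  (\int[P]_x f x = \int[Q]_x f x)%E.
Proof.
have sU : [set: X] = W `|` ~` W by rewrite setUv.
have split (mu : probability X R) :
    (\int[mu]_x f x = \int[mu]_(x in W) f x + \int[mu]_(x in ~`W) f x)%E.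
  rewrite {1}sU ge0_integral_setU //; first exact: measurableC.
    by rewrite -sU.
  by rewrite /disj_set setICr.
rewrite !split; congr (_ + _)%E.
  apply: eq_measure_integral => A mA AW.
  rewrite -(setIidl AW); exact: (agree A mA).
have PC : P (~` W) = Q (~` W).
  by rewrite !probability_setC // -(setTI W) agree.
case: (pselect (exists z, ~ W z)) => [[z0 hz0]|nz].
  transitivity (\int[P]_(x in ~`W) (cst (f z0)) x)%E.
    by apply: eq_integral => x /[!inE] hx; exact: fc.
  transitivity (\int[Q]_(x in ~`W) (cst (f z0)) x)%E; last first.
    by apply: eq_integral => x /[!inE] hx; apply: fc.
  rewrite !integral_cst; try exact: measurableC.
  by congr (_ * _)%E; exact: PC.
rewrite (_ : ~` W = set0) ?integral_set0 //.
apply/funext => x; apply/propext; split => // hx; exact: nz (ex_intro _ x hx).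
Qed.

Lemma rho_ge0 (d : measure_display) (X : measurableType d) (R : realType)
  (rho : X -> X -> R) : cnd_kernel rho -> (forall x, rho x x = 0) ->
  forall x y, 0 <= rho x y.
Proof.
move=> [sym cnd] r0 x y.
pose xs := fun i : 'I_2 => if i == ord0 then x else y.
pose c := fun i : 'I_2 => if i == ord0 then 1 else (-1 : R).
have := cnd 2 xs c.
rewrite !big_ord_recr !big_ord0 /= /xs /c /=.
rewrite !r0 (sym y x).
move=> H.
have {H} : - (rho x y *+ 2) <= 0.
  apply: le_trans (H _); last by rewrite !add0r subrr.
  rewrite mulr2n; lra.
rewrite mulr2n; lra.
Qed.

Theorem proposition4 (d : measure_display) (X : measurableType d) (R : realType)
    (rho : X -> X -> R) (w : X -> R) (v : X -> X) :
  measurable_fun setT (fun z : X * X => rho z.1 z.2) ->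
  cnd_kernel rho ->
  (forall x, rho x x = 0) ->
  measurable_fun setT w ->
  (forall x, 0 <= w x <= 1) ->
  measurable_fun setT v ->
  localising (twS rho v) (M_class (fun x x' => rho (v x) (v x'))) w <->
  (forall z z' : X, w z = 0 -> w z' = 0 ->
     forall x : X, rho (v z) (v x) = rho (v z') (v x)).
Proof.
move=> mrho cnd rho0 mw w01 mv.
have rge0 := @rho_ge0 _ _ _ rho cnd rho0.
have [sym _] := cnd.
pose F := fun z : X * X => (rho (v z.1) (v z.2))%:E.
have mF : measurable_fun setT F.
  apply/measurable_EFinP.
  have mvv : measurable_fun setT (fun z : X * X => (v z.1, v z.2)).
    apply/measurable_fun_pair; apply: measurableT_comp => //; exact: mv.
  exact: (measurableT_comp mrho mvv).
have F0 z : (0 <= F z)%E by rewrite lee_fin.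
have mfy y : measurable_fun setT (fun x => (rho (v x) (v y))%:E).
  exact: (measurable_fun_pair1 y mF).
split.
- move=> loc z z' wz wz' x.
  have key t : twS rho v (\d_ t : probability X R) x = (rho (v t) (v x))%:E.
    rewrite /twS integral_dirac //= diracT mul1e.
    rewrite (fubini_tonelli1 F mF F0).
    rewrite (eq_integral (fun a => (rho (v a) (v t))%:E)); last first.
      move=> a _; rewrite /fubini_F integral_dirac //=; last first.
        exact: (measurable_fun_pair2 a mF).
      by rewrite diracT mul1e.
    by rewrite integral_dirac //= !rho0 !mulr0 !oppr0 !adde0.
  have Mt t : M_class (fun x x' => rho (v x) (v x')) (\d_ t : probability X R).
    by exists t; rewrite integral_dirac //= diracT mul1e ltry.
  have ag : forall A, measurable A ->
      (\d_ z : probability X R) (A `&` [set x | 0 < w x]) =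
      (\d_ z' : probability X R) (A `&` [set x | 0 < w x]).
    move=> A mA; rewrite /= !diracE !memNset //.
      by move=> [_ /=]; rewrite wz' ltxx.
    by move=> [_ /=]; rewrite wz ltxx.
  by have := loc _ _ (Mt z) (Mt z') ag x; rewrite !key => -[].
- move=> H P Q MP MQ ag y.
  have W0 z : ~ (0 < w z) -> w z = 0.
    move=> nz; have /andP[h _] := w01 z.
    by apply/eqP; rewrite eq_le h andbT leNgt; apply/negP.
  have mW : measurable [set x | 0 < w x].
    have -> : [set x | 0 < w x] = w @^-1` `]0, +oo[.
      by apply/funext => x; rewrite /preimage /= in_itv /= andbT.
    by rewrite -(setTI (w @^-1` _)); apply: mw => //; exact: measurable_itv.
  have L := @L1 _ _ _ P Q _ mW ag.
  rewrite /twS.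
  rewrite (L _ (mfy y)); last first.
    by move=> z z' nz nz'; rewrite (H z z') // W0.
    by move=> x; rewrite lee_fin.
  congr (_ - _ - _)%E; congr (_ * _)%E.
  rewrite !(fubini_tonelli1 F mF F0).
  transitivity (\int[P]_a (fubini_F Q F a))%E.
    apply: eq_integral => a _; rewrite /fubini_F.
    apply: (L _ (measurable_fun_pair2 a mF)) => //.
    by move=> z z' nz nz'; rewrite /F /= (sym _ (v z)) (sym _ (v z')) (H z z') // W0.
  rewrite (L _ (measurable_fun_fubini_tonelli_F F mF F0)) //.
    by move=> x; apply: integral_ge0 => b _.
  move=> z z' nz nz'; rewrite /fubini_F; apply: eq_integral => b _.
  by rewrite /F /= (H z z') // W0.
Qed.
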